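(* Let $q$ be a prime with $q \equiv 3 \pmod 4$ and define $\phi:\mathbb{F}_q \to SO(2,q)\setminus\{I\}$ by $$\phi(r) = \begin{pmatrix} \frac{r^2-1}{r^2+1} & \frac{-2r}{r^2+1} \\ \frac{2r}{r^2+1} & \frac{r^2-1}{r^2+1}\end{pmatrix}.$$ For $x,y \in \mathbb{F}_q^2$, the set $l_{x\to y} = \{(p,r) \in \mathbb{F}_q^2\times\mathbb{F}_q : f_{p,\phi(r)}(x) = y\}$ is an (affine) line in $\mathbb{F}_q^3$.
   Context: $SO(2,q) = \{A \in \mathrm{Mat}_2(\mathbb{F}_q) : A^TA = I, \det A = 1\}$; since $-1$ is not a square in $\mathbb{F}_q$, $r^2+1 \neq 0$ for all $r$, so $\phi$ is well defined. For $p \in \mathbb{F}_q^2$ and $\theta \in SO(2,q)$, $f_{p,\theta}(x) = \theta(x-p)+p$. Points $(p,r)$ with $p \in \mathbb{F}_q^2$, $r\in\mathbb{F}_q$ are identified with points of $\mathbb{F}_q^3$. *)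

(* Defs.v *)
From HB Require Import structures.
From mathcomp Require Import all_boot all_order all_algebra.
Set Implicit Arguments. Unset Strict Implicit. Unset Printing Implicit Defensive.
Import Order.TTheory GRing.Theory Num.Theory.
Local Open Scope ring_scope.

Definition inSO2 (F : fieldType) (A : 'M[F]_2) : bool :=
  (A^T *m A == 1%:M) && (\det A == 1).

Definition phi (F : fieldType) (r : F) : 'M[F]_2 :=
  \matrix_(i < 2, j < 2)
    if (i : nat) == 0%N then
      (if (j : nat) == 0%N then (r ^+ 2 - 1) / (r ^+ 2 + 1)
       else - (2 * r) / (r ^+ 2 + 1))
    else
      (if (j : nat) == 0%N then (2 * r) / (r ^+ 2 + 1)
       else (r ^+ 2 - 1) / (r ^+ 2 + 1)).

Definition frot (F : fieldType) (p : 'cV[F]_2) (theta : 'M[F]_2) (x : 'cV[F]_2)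
  : 'cV[F]_2 := theta *m (x - p) + p.

Definition pt3 (F : fieldType) (p : 'cV[F]_2) (r : F) : 'cV[F]_3 :=
  \col_(i < 3) (if (i : nat) == 0%N then p ord0 ord0
                else if (i : nat) == 1%N then p (inord 1) ord0 else r).

Definition affine_line (F : fieldType) (S : 'cV[F]_3 -> Prop) : Prop :=
  exists (a d : 'cV[F]_3), d != 0 /\
    forall v, S v <-> exists t : F, v = a + t *: d.

Definition line_xy (F : fieldType) (x y : 'cV[F]_2) (v : 'cV[F]_3) : Prop :=
  exists (p : 'cV[F]_2) (r : F), v = pt3 p r /\ frot p (phi r) x = y.

(* Main.v *)
Require Import Defs.
From HB Require Import structures.
From mathcomp Require Import all_boot all_order all_algebra all_field ring.
Import GRing.Theory.
Local Open Scope ring_scope.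
Lemma I2 (i : 'I_2) : i = ord0 \/ i = ord_max.
Proof. case: i => [[|[|//]]] H; [left|right]; exact: val_inj. Qed.

Lemma big2 (R : nmodType) (f : 'I_2 -> R) : \sum_(i < 2) f i = f ord0 + f ord_max.
Proof. rewrite !big_ord_recr big_ord0 /= add0r. congr (f _ + f _); exact: val_inj. Qed.

Lemma J1 (j : 'I_1) : j = ord0.
Proof. by apply: val_inj; case: j => [[]]. Qed.

Section G.
Variable F : fieldType.
Hypothesis h2 : (2%:R : F) != 0.
Hypothesis hd : forall r : F, r ^+ 2 + 1 != 0.

Lemma phiSO (r : F) : inSO2 (phi r) && (phi r != 1%:M).
Proof.
have := hd r => hr.
rewrite /inSO2; apply/andP; split; [apply/andP; split|].
- apply/eqP/matrixP => i j; rewrite !mxE big2 !mxE.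
  have [->|->] := I2 i; have [->|->] := I2 j; rewrite /= ?mxE /=. all: try (field; done).
- rewrite (expand_det_row _ ord0) big2 /cofactor !mxE /=.
  rewrite !det_mx11 !mxE /=; by apply/eqP; field.
- apply/eqP => /matrixP/(_ ord0 ord0); rewrite !mxE /= => H.
  have : 2%:R = (r^+2+1) * (1 - (r^+2-1)/(r^+2+1)) :> F by field.
  by rewrite H subrr mulr0; apply/eqP.
Qed.

Lemma I3 (i : 'I_3) : i = ord0 \/ i = (@Ordinal 3 1 erefl) \/ i = ord_max.
Proof. case: i => [[|[|[|//]]]] H; [left|right;left|right;right]; exact: val_inj. Qed.

Lemma lineG (x y : 'cV[F]_2) : affine_line (line_xy x y).
Proof.
have E1 : (inord 1 : 'I_2) = ord_max by apply: val_inj; rewrite /= inordK.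
set x0 := x ord0 ord0; set x1 := x ord_max ord0.
set y0 := y ord0 ord0; set y1 := y ord_max ord0.
pose f0 t := (x0 + y0) / 2%:R - t * (y1 - x1) / 2%:R.
pose f1 t := (x1 + y1) / 2%:R + t * (y0 - x0) / 2%:R.
exists (\col_(i < 3) (if (i : nat) == 0%N then (x0 + y0) / 2%:R
          else if (i : nat) == 1%N then (x1 + y1) / 2%:R else 0)).
exists (\col_(i < 3) (if (i : nat) == 0%N then - (y1 - x1) / 2%:R
          else if (i : nat) == 1%N then (y0 - x0) / 2%:R else 1)).
split.
  apply/eqP => /matrixP/(_ ord_max ord0); rewrite !mxE /= => /eqP.
  by rewrite oner_eq0.
move=> v; split.
- rewrite /x0 /x1 /y0 /y1; case=> p [r [-> Hf]]; exists r.
  have Ea := congr1 (fun M : 'M[F]_(2,1) => M ord0 ord0) Hf.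
  have Eb := congr1 (fun M : 'M[F]_(2,1) => M ord_max ord0) Hf.
  rewrite /= /frot !mxE !big2 !mxE /= in Ea Eb.
  apply/matrixP => i j; rewrite (J1 j) /pt3.
  have hr := hd r.
  have [->|[->|->]] := I3 i; rewrite !mxE ?E1 /= -?Ea -?Eb; move: (x ord0 ord0 : F) (x ord_max ord0 : F) (p ord0 ord0 : F) (p ord_max ord0 : F) => a0 a1 b0 b1; by field; rewrite ?h2 ?hd.
- case=> t ->.
  exists (\col_(i < 2) (if (i : nat) == 0%N then f0 t else f1 t)), t.
  have ht := hd t.
  split.
    apply/matrixP => i j; rewrite (J1 j) /pt3.
    by have [->|[->|->]] := I3 i; rewrite ?mxE ?E1 /= /f0 /f1; field; rewrite ?h2 ?hd.
  apply/matrixP => i j; rewrite (J1 j) /frot !mxE !big2 !mxE /=.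
  have [->|->] := I2 i; rewrite ?mxE /= /f0 /f1 /x0 /x1 /y0 /y1; move: (x ord0 ord0 : F) (x ord_max ord0 : F) (y ord0 ord0 : F) (y ord_max ord0 : F) => a0 a1 b0 b1; by field; rewrite ?h2 ?hd.
Qed.
End G.

Theorem lemma2p2 (q : nat) (hq : prime q) (hq4 : (q %% 4 = 3)%N) :
  (forall r : 'F_q, inSO2 (phi r) && (phi r != 1%:M)) /\
  (forall x y : 'cV['F_q]_2, affine_line (line_xy x y)).
Proof.
have q3 : (3 <= q)%N by rewrite -{1}hq4 leq_mod.
have h2 : (2%:R : 'F_q) != 0.
  rewrite -(dvdn_pcharf (pchar_Fp hq)); apply/negP => /(dvdn_leq (isT : (0 < 2)%N)).
  by move=> H; have := leq_trans q3 H.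
have hd : forall r : 'F_q, r ^+ 2 + 1 != 0.
  move=> r; apply/negP => /eqP Hr.
  have r2 : r ^+ 2 = -1 by apply/eqP; rewrite -addr_eq0 Hr.
  have r4 : r ^+ 4 = 1 by rewrite (_ : 4 = 2 * 2)%N // exprM r2 sqrrN expr1n.
  have Eqn : q = (q %/ 4 * 4 + 3)%N by rewrite {1}(divn_eq q 4) hq4.
  have : r ^+ (q %/ 4 * 4 + 3) = r.
    by rewrite -Eqn -{2}(expf_card r) card_Fp.
  rewrite exprD mulnC exprM r4.
  rewrite expr1n mul1r exprSr r2 mulN1r => H.
  have : r *+ 2 = 0 by rewrite mulr2n -{1}H addNr.
  rewrite -mulr_natl => /eqP; rewrite mulf_eq0 (negbTE h2) /= => /eqP r0.
  by move: Hr; rewrite r0 expr0n /= add0r => /eqP; rewrite oner_eq0.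
split; [exact: phiSO | exact: lineG].
Qed.
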